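(* For every nonnegative integer $r$, $$\sum_{n=1}^{\infty}\frac{1}{(2n+2r+3)(n+1)(2n+1)(2n+3)}\frac{\binom{2n}{n}}{\binom{2n+2r+2}{n+r+1}}=\frac{1}{2^{2r+1}}\left(\frac{3}{8(r+1)}+\frac{4\wp(2r+2)+2\wp(2r)}{8}\right)-\frac{1}{3(2r+3)\binom{2r+2}{r+1}}-\frac{1}{2(2r+1)\binom{2r}{r}},$$ where $\wp(q)=\int_0^{\pi/2} z\sin^q z\,\mathrm{d}z$. *)

(* Defs.v *)
From Stdlib Require Import Reals.
From Coquelicot Require Import Coquelicot.
Open Scope R_scope.

Definition wp (q : nat) : R := RInt (fun z => z * (sin z) ^ q) 0 (PI / 2).

Definition binomR (n k : nat) : R := Binomial.C n k.

Definition term5 (r n : nat) : R :=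
  1 / ((2 * INR n + 2 * INR r + 3) * (INR n + 1) * (2 * INR n + 1) * (2 * INR n + 3))
  * (binomR (2 * n) n / binomR (2 * n + 2 * r + 2) (n + r + 1)).

Definition rhs5 (r : nat) : R :=
  1 / 2 ^ (2 * r + 1) * (3 / (8 * (INR r + 1)) + (4 * wp (2 * r + 2) + 2 * wp (2 * r)) / 8)
  - 1 / (3 * (2 * INR r + 3) * binomR (2 * r + 2) (r + 1))
  - 1 / (2 * (2 * INR r + 1) * binomR (2 * r) r).

(* Main.v *)
Require Import Defs.
From Stdlib Require Import Reals.
From Coquelicot Require Import Coquelicot.
From Stdlib Require Import Lra Lia Arith Factorial.
Open Scope R_scope.



Lemma lin2 (f g : R -> R) (a b lo hi l : R) :
  ex_RInt f lo hi -> ex_RInt g lo hi ->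
  is_RInt (fun x => a * f x + b * g x) lo hi l ->
  a * RInt f lo hi + b * RInt g lo hi = l.
Proof.
  intros Hf Hg H.
  rewrite <- (is_RInt_unique _ _ _ _ H). symmetry.
  apply is_RInt_unique.
  assert (E : is_RInt (fun x => plus (scal a (f x)) (scal b (g x))) lo hi (plus (scal a (RInt f lo hi)) (scal b (RInt g lo hi)))).
  { apply (is_RInt_plus (V:=R_NormedModule)); apply (is_RInt_scal (V:=R_NormedModule)); apply (RInt_correct (V:=R_CompleteNormedModule)); auto. }
  exact E.
Qed.

Lemma lin3 (f g h : R -> R) (a b c lo hi l : R) :
  ex_RInt f lo hi -> ex_RInt g lo hi -> ex_RInt h lo hi ->
  is_RInt (fun x => a * f x + b * g x + c * h x) lo hi l ->
  a * RInt f lo hi + b * RInt g lo hi + c * RInt h lo hi = l.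
Proof.
  intros Hf Hg Hh H.
  rewrite <- (is_RInt_unique _ _ _ _ H). symmetry.
  apply is_RInt_unique.
  assert (E : is_RInt (fun x => plus (plus (scal a (f x)) (scal b (g x))) (scal c (h x))) lo hi (plus (plus (scal a (RInt f lo hi)) (scal b (RInt g lo hi))) (scal c (RInt h lo hi)))).
  { apply (is_RInt_plus (V:=R_NormedModule)); [apply (is_RInt_plus (V:=R_NormedModule))|]; apply (is_RInt_scal (V:=R_NormedModule)); apply (RInt_correct (V:=R_CompleteNormedModule)); auto. }
  exact E.
Qed.

Lemma exR (f : R -> R) lo hi : (forall x, ex_derive f x) -> ex_RInt f lo hi.
Proof. intros H. apply (ex_RInt_continuous (V:=R_CompleteNormedModule)). intros z _. apply (ex_derive_continuous (K:=R_AbsRing) (V:=R_NormedModule)). apply H. Qed.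

Lemma RIntD (f df : R -> R) (a b : R) :
  (forall x, Rmin a b <= x <= Rmax a b -> is_derive f x (df x)) ->
  (forall x, Rmin a b <= x <= Rmax a b -> ex_derive df x) ->
  is_RInt df a b (f b - f a).
Proof.
  intros H1 H2.
  apply (is_RInt_derive (V:=R_CompleteNormedModule)); auto.
  intros x Hx. apply (ex_derive_continuous (K:=R_AbsRing) (V:=R_NormedModule)). auto.
Qed.

Lemma PI2_pos : 0 < PI / 2.
Proof. generalize PI_RGT_0; lra. Qed.

Lemma xcos_le_sin x : 0 <= x <= PI/2 -> x * cos x <= sin x.
Proof.
  intros Hx.
  assert (H : is_RInt (fun t => t * sin t) 0 x ((fun t => sin t - t * cos t) x - (fun t => sin t - t * cos t) 0)).
  { apply (RIntD (fun t => sin t - t * cos t)).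
    - intros t _. auto_derive; auto. ring.
    - intros t _. auto_derive; auto. }
  pose proof (is_RInt_unique _ _ _ _ H) as H1; clear H; rename H1 into H; simpl in H.
  rewrite sin_0, cos_0 in H.
  assert (0 <= RInt (fun t => t * sin t) 0 x).
  { apply RInt_ge_0. lra. apply exR. intros; auto_derive; auto.
    intros t Ht. apply Rmult_le_pos. lra. apply sin_ge_0; generalize PI_RGT_0; lra. }
  lra.
Qed.

Lemma sin2' x : sin x ^ 2 = 1 - cos x ^ 2.
Proof. generalize (sin2_cos2 x). unfold Rsqr. intros; nra. Qed.

Lemma RIntD' (f df : R -> R) (a b v : R) :
  f b - f a = v ->
  (forall x, Rmin a b <= x <= Rmax a b -> is_derive f x (df x)) ->
  (forall x, Rmin a b <= x <= Rmax a b -> ex_derive df x) ->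
  is_RInt df a b v.
Proof. intros <-. apply RIntD. Qed.

Ltac fixINR := repeat match goal with |- context [match ?k with O => 1 | S _ => INR ?k + 1 end] => change (match k with O => 1 | S _ => INR k + 1 end) with (INR (S k)) end.
Ltac trig_fin := fixINR; cbn [Nat.pred pow]; rewrite ?S_INR; ring_simplify; rewrite ?sin2'; ring.

Lemma LA n :
  (INR n + 2) * RInt (fun x => cos x ^ (S (S n))) 0 (PI/2)
  + (- (INR n + 1)) * RInt (fun x => cos x ^ n) 0 (PI/2) = 0.
Proof.
  apply lin2; try (apply exR; intros; auto_derive; auto).
  apply (RIntD' (fun x => sin x * cos x ^ (S n))).
  { simpl. rewrite cos_PI2, sin_0. ring. }
  - intros x _. auto_derive; auto. trig_fin.
  - intros y _. auto_derive; auto.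
Qed.

Lemma cos2' x : cos x ^ 2 = 1 - sin x ^ 2.
Proof. rewrite sin2'. ring. Qed.

Lemma INRp2 n : INR n + 2 <> 0.
Proof. generalize (pos_INR n); lra. Qed.

Lemma LB n :
  2 * RInt (fun x => cos x ^ (S (S n))) 0 (PI/2)
  + (- ((INR n + 2) * (INR n + 1))) * RInt (fun x => x ^ 2 * cos x ^ n) 0 (PI/2)
  + ((INR n + 2) * (INR n + 2)) * RInt (fun x => x ^ 2 * cos x ^ (S (S n))) 0 (PI/2) = 0.
Proof.
  apply lin3; try (apply exR; intros; auto_derive; auto).
  apply (RIntD' (fun x => (INR n + 2) * x ^ 2 * sin x * cos x ^ (S n) + 2 * x * cos x ^ (S (S n)))).
  { rewrite cos_PI2, sin_0. cbn [pow]. ring. }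
  - intros x _. auto_derive; auto. trig_fin.
  - intros y _. auto_derive; auto.
Qed.

Lemma LJ n :
  (INR n + 2) * RInt (fun z => z * sin z ^ (S (S n))) 0 (PI/2)
  + (- (INR n + 1)) * RInt (fun z => z * sin z ^ n) 0 (PI/2) = 1 / (INR n + 2).
Proof.
  apply lin2; try (apply exR; intros; auto_derive; auto).
  apply (RIntD' (fun z => - z * sin z ^ (S n) * cos z + sin z ^ (S (S n)) / (INR n + 2))).
  { rewrite cos_PI2, sin_0, sin_PI2, pow1. cbn [pow]. rewrite pow1. field. apply INRp2. }
  - intros x _. auto_derive; auto. fixINR; cbn [Nat.pred pow]; rewrite ?S_INR.
    replace (INR n + 1 + 1) with (INR n + 2) by ring.
    replace (1 * cos x * ((INR n + 2) * (sin x * sin x ^ n)) * / (INR n + 2)) with (cos x * sin x * sin x ^ n) by (field; apply INRp2).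
    ring_simplify. rewrite ?cos2'. ring.
  - intros y _. auto_derive; auto.
Qed.

Lemma tele (u : nat -> R) (l : R) :
  is_lim_seq u l -> is_series (fun n => u (S n) - u n) (l - u O).
Proof.
  intros H.
  assert (E : forall n, sum_n (fun n => u (S n) - u n) n = u (S n) - u O).
  { induction n. rewrite sum_O. reflexivity. rewrite sum_Sn, IHn. unfold plus; simpl. ring. }
  assert (H2 : is_lim_seq (fun n => u (S n) - u O) (l - u O)).
  { apply (is_lim_seq_minus' _ _ l (u O)). apply (is_lim_seq_incr_1 u l). exact H. apply is_lim_seq_const. }
  assert (H3 : is_lim_seq (sum_n (fun n => u (S n) - u n)) (l - u O)).
  { apply (is_lim_seq_ext _ _ _ (fun n => eq_sym (E n))). exact H2. }
  exact H3.
Qed.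

Lemma lim_invN : is_lim_seq (fun n => / INR (S n)) 0.
Proof.
  assert (H : is_lim_seq (fun n => INR (S n)) p_infty).
  { apply (is_lim_seq_incr_1 INR p_infty). apply is_lim_seq_INR. }
  apply is_lim_seq_inv in H. exact H. discriminate.
Qed.

Lemma INRS_pos n : 0 < INR (S n).
Proof. apply lt_0_INR. lia. Qed.

Lemma limL (a b c d : R) :
  c <> 0 -> (forall n, c * INR (S n) + d <> 0) ->
  is_lim_seq (fun n => (a * INR (S n) + b) / (c * INR (S n) + d)) (a / c).
Proof.
  intros Hc Hd.
  assert (H : is_lim_seq (fun n => (a + b * / INR (S n)) / (c + d * / INR (S n))) ((a + b * 0) / (c + d * 0))).
  { apply is_lim_seq_div'.
    - apply is_lim_seq_plus'. apply is_lim_seq_const. apply is_lim_seq_mult'. apply is_lim_seq_const. apply lim_invN.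
    - apply is_lim_seq_plus'. apply is_lim_seq_const. apply is_lim_seq_mult'. apply is_lim_seq_const. apply lim_invN.
    - replace (c + d * 0) with c by ring. exact Hc. }
  replace (a / c) with ((a + b * 0) / (c + d * 0)) by (field; auto).
  apply (is_lim_seq_ext _ _ _ ) with (2 := H).
  intros n. generalize (INRS_pos n) (Hd n). intros. field. split; auto.
  intros E. apply (Hd n). replace (c * INR (S n) + d) with (INR (S n) * (c + d * / INR (S n))) by (field; lra).
  rewrite E; ring.
Qed.

Lemma limQ (a b c d e f : R) :
  d <> 0 -> (forall n, d * INR (S n) ^ 2 + e * INR (S n) + f <> 0) ->
  is_lim_seq (fun n => (a * INR (S n) ^ 2 + b * INR (S n) + c) / (d * INR (S n) ^ 2 + e * INR (S n) + f)) (a / d).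
Proof.
  intros Hc Hd.
  assert (H : is_lim_seq (fun n => (a + b * / INR (S n) + c * (/ INR (S n) * / INR (S n))) / (d + e * / INR (S n) + f * (/ INR (S n) * / INR (S n)))) ((a + b * 0 + c * (0 * 0)) / (d + e * 0 + f * (0 * 0)))).
  { apply is_lim_seq_div'.
    - apply is_lim_seq_plus'. apply is_lim_seq_plus'. apply is_lim_seq_const. apply is_lim_seq_mult'. apply is_lim_seq_const. apply lim_invN.
      apply is_lim_seq_mult'. apply is_lim_seq_const. apply is_lim_seq_mult'; apply lim_invN.
    - apply is_lim_seq_plus'. apply is_lim_seq_plus'. apply is_lim_seq_const. apply is_lim_seq_mult'. apply is_lim_seq_const. apply lim_invN.
      apply is_lim_seq_mult'. apply is_lim_seq_const. apply is_lim_seq_mult'; apply lim_invN.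
    - replace (d + e * 0 + f * (0 * 0)) with d by ring. exact Hc. }
  replace (a / d) with ((a + b * 0 + c * (0 * 0)) / (d + e * 0 + f * (0 * 0))) by (field; auto).
  apply (is_lim_seq_ext _ _ _ ) with (2 := H).
  intros n. generalize (INRS_pos n) (Hd n). intros. field. split; auto.
  intros E. apply (Hd n).
  replace (d * INR (S n) ^ 2 + e * INR (S n) + f) with (INR (S n) ^ 2 * (d + e * / INR (S n) + f * (/ INR (S n) * / INR (S n)))) by (field; lra).
  rewrite E; ring.
Qed.

Definition Aq k : R := RInt (fun x => cos x ^ (2*k+1)) 0 (PI/2).
Definition Bq k : R := RInt (fun x => x ^ 2 * cos x ^ (2*k+1)) 0 (PI/2).

Lemma Aq0 : Aq 0 = 1.
Proof.
  unfold Aq. apply is_RInt_unique.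
  apply (RIntD' sin). rewrite sin_PI2, sin_0; ring.
  intros x _. auto_derive; auto. simpl; ring.
  intros x _. auto_derive; auto.
Qed.

Lemma Bq0 : Bq 0 = PI ^ 2 / 4 - 2.
Proof.
  unfold Bq. apply is_RInt_unique.
  apply (RIntD' (fun x => x ^ 2 * sin x + 2 * x * cos x - 2 * sin x)).
  rewrite sin_PI2, sin_0, cos_PI2, cos_0; field.
  intros x _. auto_derive; auto. simpl; ring.
  intros x _. auto_derive; auto.
Qed.

Lemma Ssk k : (2 * S k + 1 = S (S (2 * k + 1)))%nat.
Proof. lia. Qed.

Lemma Arec k : Aq (S k) = (2 * INR k + 2) / (2 * INR k + 3) * Aq k.
Proof.
  unfold Aq. rewrite Ssk. generalize (LA (2*k+1)). rewrite plus_INR, mult_INR. simpl INR.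
  intros H. apply (Rmult_eq_reg_l (2 * INR k + 3)).
  2:{ generalize (pos_INR k); lra. }
  field_simplify. 2:{ generalize (pos_INR k); lra. } lra.
Qed.

Lemma Apos k : 0 < Aq k.
Proof.
  induction k. rewrite Aq0; lra.
  rewrite Arec. generalize (pos_INR k); intros.
  apply Rmult_lt_0_compat; auto. apply Rdiv_lt_0_compat; lra.
Qed.

Lemma Brec k : 2 * Aq (S k) - (2 * INR k + 3) * (2 * INR k + 2) * Bq k + (2 * INR k + 3) ^ 2 * Bq (S k) = 0.
Proof.
  unfold Aq, Bq. rewrite Ssk. generalize (LB (2*k+1)). rewrite plus_INR, mult_INR. simpl INR.
  intros H. lra.
Qed.

Definition beta k : R := Bq k / Aq k.

Lemma beta_rec k : beta k - beta (S k) = 2 / (2 * INR k + 3) ^ 2.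
Proof.
  unfold beta. generalize (Brec k) (Arec k) (Apos k) (Apos (S k)) (pos_INR k). intros H1 H2 H3 H4 H5.
  assert (E : Bq (S k) = ((2 * INR k + 3) * (2 * INR k + 2) * Bq k - 2 * Aq (S k)) / (2 * INR k + 3) ^ 2).
  { assert (Hq : (2 * INR k + 3) ^ 2 <> 0) by (apply pow_nonzero; lra).
    apply (Rmult_eq_reg_l ((2 * INR k + 3) ^ 2)); auto.
    replace ((2 * INR k + 3) ^ 2 * (((2 * INR k + 3) * (2 * INR k + 2) * Bq k - 2 * Aq (S k)) / (2 * INR k + 3) ^ 2))
      with ((2 * INR k + 3) * (2 * INR k + 2) * Bq k - 2 * Aq (S k)) by (field; lra).
    lra. }
  rewrite E, H2. field. repeat split; lra.
Qed.

Lemma Bq_ge0 k : 0 <= Bq k.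
Proof.
  unfold Bq. apply RInt_ge_0. generalize PI2_pos; lra.
  apply exR; intros; auto_derive; auto.
  intros x Hx. apply Rmult_le_pos. apply pow2_ge_0. apply pow_le. apply cos_ge_0; lra.
Qed.

Lemma Bq_le k : Bq (S k) <= Aq k - Aq (S k).
Proof.
  unfold Aq, Bq. rewrite Ssk.
  rewrite <- (RInt_minus (V:=R_CompleteNormedModule)); try (apply exR; intros; auto_derive; auto).
  apply RInt_le. generalize PI2_pos; lra.
  apply exR; intros; auto_derive; auto.
  apply (ex_RInt_minus (V:=R_CompleteNormedModule)); apply exR; intros; auto_derive; auto.
  intros x Hx. change (minus ?a ?b) with (a - b). cbn [pow].
  assert (H1 := xcos_le_sin x ltac:(lra)).
  assert (H2 : 0 <= cos x) by (apply cos_ge_0; lra).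
  assert (H3 : 0 <= x * cos x) by (apply Rmult_le_pos; lra).
  assert (H4 : 0 <= cos x ^ (2*k+1)) by (apply pow_le; lra).
  assert (H5 := sin2' x).
  assert (H6 : (x * cos x) ^ 2 <= sin x ^ 2) by (apply pow_incr; lra).
  replace (x ^ 2 * (cos x * (cos x * cos x ^ (2 * k + 1)))) with ((x * cos x) ^ 2 * cos x ^ (2*k+1)) by ring.
  replace (cos x * (cos x * cos x ^ (2 * k + 1))) with (cos x ^ 2 * cos x ^ (2*k+1)) by ring.
  assert (H7 : (x * cos x) ^ 2 * cos x ^ (2*k+1) <= sin x ^ 2 * cos x ^ (2*k+1)) by (apply Rmult_le_compat_r; auto).
  rewrite H5 in H7. lra.
Qed.

Lemma beta_lim : is_lim_seq beta 0.
Proof.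
  apply (is_lim_seq_incr_1 beta 0).
  apply (is_lim_seq_le_le (fun _ => 0) _ (fun n => (0 * INR (S n) + 1) / (2 * INR (S n) + 0))).
  - intros n. unfold beta. split.
    + apply Rdiv_le_0_compat. apply Bq_ge0. apply Apos.
    + generalize (Bq_le n) (Arec n) (Apos n) (Apos (S n)) (pos_INR n). intros HB HA HA0 HA1 Hn.
      assert (E : Aq n - Aq (S n) = Aq (S n) / (2 * INR n + 2)) by (rewrite HA; field; lra).
      rewrite S_INR. replace ((0 * (INR n + 1) + 1) / (2 * (INR n + 1) + 0)) with (1 / (2 * INR n + 2)) by (field; lra).
      unfold Rdiv. apply Rmult_le_reg_r with (Aq (S n)); auto.
      rewrite Rmult_assoc, Rinv_l, Rmult_1_r by lra. unfold Rdiv in E. lra.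
  - apply is_lim_seq_const.
  - replace (Finite 0) with (Finite (0 / 2)) by (f_equal; field). apply limL. lra.
    intros n. generalize (INRS_pos n); lra.
Qed.

Lemma odd_basel : is_series (fun k => 1 / (2 * INR k + 3) ^ 2) (PI ^ 2 / 8 - 1).
Proof.
  assert (Hl : is_lim_seq (fun k => - beta k) 0).
  { replace (Finite 0) with (Rbar_opp (Finite 0)) by (simpl; f_equal; ring).
    apply is_lim_seq_opp. apply (is_lim_seq_ext beta). intros; ring.
    simpl. replace (- - 0) with 0 by ring. apply beta_lim. }
  pose proof (tele (fun k => - beta k) 0 Hl) as H.
  apply (is_series_scal (K:=R_AbsRing) (V:=R_NormedModule) (1/2)) in H.
  assert (B0 : beta 0 = PI ^ 2 / 4 - 2) by (unfold beta; rewrite Aq0, Bq0; field).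
  replace (PI ^ 2 / 8 - 1) with (scal (1/2) (0 - - beta 0)).
  2:{ rewrite B0. unfold scal; simpl. unfold mult; simpl. field. }
  apply (is_series_ext _ _ _ ) with (2 := H).
  intros n. unfold scal; simpl. unfold mult; simpl.
  generalize (beta_rec n) (pos_INR n). simpl pow. intros E Hn. replace (- beta (S n) - - beta n) with (beta n - beta (S n)) by ring. rewrite E. field. lra.
Qed.

Definition Bc (m : nat) : R := binomR (2 * m) m.

Lemma B_pos m : 0 < Bc m.
Proof.
  unfold Bc, binomR, Binomial.C. apply Rdiv_lt_0_compat.
  apply lt_0_INR, lt_O_fact.
  apply Rmult_lt_0_compat; apply lt_0_INR, lt_O_fact.
Qed.

Lemma B_S m : Bc (S m) = 2 * (2 * INR m + 1) / (INR m + 1) * Bc m.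
Proof.
  unfold Bc, binomR, Binomial.C.
  replace (2 * S m - S m)%nat with (S m) by lia.
  replace (2 * m - m)%nat with m by lia.
  replace (2 * S m)%nat with (S (S (2 * m))) by lia.
  change (fact (S (S (2 * m)))) with (S (S (2 * m)) * (S (2 * m) * fact (2 * m)))%nat.
  change (fact (S m)) with (S m * fact m)%nat.
  rewrite !mult_INR, !S_INR, mult_INR. simpl INR.
  generalize (INR_fact_neq_0 m) (INR_fact_neq_0 (2 * m)) (pos_INR m). intros.
  field. repeat split; lra.
Qed.

Lemma Bc0 : Bc 0 = 1.
Proof. unfold Bc, binomR, Binomial.C. simpl. field. Qed.

Lemma Bc1 : Bc 1 = 2.
Proof. rewrite B_S, Bc0. simpl. field. Qed.

Definition xrt (r n : nat) : R := Bc n / Bc (n + r + 1).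

Definition den (r n : nat) : R :=
  (2 * INR n + 2 * INR r + 3) * (INR n + 1) * (2 * INR n + 1) * (2 * INR n + 3).

Lemma term5_eq r n : term5 r n = xrt r n / den r n.
Proof.
  unfold term5, xrt, den, Bc.
  replace (2 * n + 2 * r + 2)%nat with (2 * (n + r + 1))%nat by lia.
  field. generalize (pos_INR n) (pos_INR r). intros. repeat split; try lra.
  generalize (B_pos (n + r + 1)). unfold Bc. lra.
Qed.

Lemma xrt_Sr r n : xrt (S r) n = xrt r n * (INR n + INR r + 2) / (2 * (2 * INR n + 2 * INR r + 3)).
Proof.
  unfold xrt. replace (n + S r + 1)%nat with (S (n + r + 1)) by lia.
  rewrite B_S. rewrite !plus_INR. simpl INR.
  generalize (B_pos (n + r + 1)) (pos_INR n) (pos_INR r). intros.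
  field. repeat split; lra.
Qed.

Lemma xrt_Sn r n : xrt r (S n) = xrt r n * ((2 * INR n + 1) * (INR n + INR r + 2)) / ((INR n + 1) * (2 * INR n + 2 * INR r + 3)).
Proof.
  unfold xrt. replace (S n + r + 1)%nat with (S (n + r + 1)) by lia.
  rewrite !B_S. rewrite !plus_INR. simpl INR.
  generalize (B_pos (n + r + 1)) (B_pos n) (pos_INR n) (pos_INR r). intros.
  field. repeat split; lra.
Qed.

Definition Dr (r : nat) : R := (INR r + 1) * (INR r + 2) ^ 2 * (3 * INR r + 2).
Definition al (r : nat) : R := (2 * INR r + 1) * (3 * INR r + 5) / (8 * (INR r + 2) * (3 * INR r + 2)).
Definition qq (r n : nat) : R :=
  (8 * INR n ^ 2 + 4 * (INR r + 3) * INR n - (INR r + 2) * (INR r - 1)) / (8 * Dr r).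
Definition Gc (r n : nat) : R := qq r n * xrt r n / ((2 * INR n + 2 * INR r + 3) * (2 * INR n + 1)).

Lemma Tstep r n : term5 (S r) n - al r * term5 r n = Gc r (S n) - Gc r n.
Proof.
  rewrite !term5_eq. unfold Gc, qq. rewrite xrt_Sr, xrt_Sn. unfold den, al, Dr. rewrite !S_INR.
  generalize (pos_INR n) (pos_INR r). intros.
  field. repeat split; lra.
Qed.

Lemma xrt_lim r : is_lim_seq (xrt r) (/ 4 ^ (S r)).
Proof.
  induction r.
  - apply (is_lim_seq_ext (fun n => (1 * INR (S n) + 0) / (4 * INR (S n) + -2))).
    + intros n. unfold xrt. replace (n + 0 + 1)%nat with (S n) by lia. rewrite B_S, S_INR.
      generalize (B_pos n) (pos_INR n). intros. field. repeat split; lra.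
    + replace (/ 4 ^ 1) with (1 / 4) by (simpl; field). apply limL. lra.
      intros n. rewrite S_INR. generalize (pos_INR n). lra.
  - apply (is_lim_seq_ext (fun n => xrt r n * ((1 * INR (S n) + (INR r + 1)) / (4 * INR (S n) + (4 * INR r + 2))))).
    + intros n. rewrite xrt_Sr, S_INR. generalize (pos_INR n) (pos_INR r). intros. field. lra.
    + replace (/ 4 ^ S (S r)) with (/ 4 ^ S r * (1 / 4)) by (simpl; field; apply pow_nonzero; lra).
      apply is_lim_seq_mult'. auto. apply limL. lra.
      intros n. generalize (INRS_pos n) (pos_INR r). lra.
Qed.

Lemma Dr_pos r : 0 < Dr r.
Proof. unfold Dr. generalize (pos_INR r). intros. apply Rmult_lt_0_compat. apply Rmult_lt_0_compat. lra. apply pow_lt; lra. lra. Qed.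

Definition Lr (r : nat) : R := 1 / (4 * Dr r) * / 4 ^ (S r).

Lemma Gc_lim r : is_lim_seq (Gc r) (Lr r).
Proof.
  set (R := INR r). set (D := Dr r).
  assert (HD : 0 < D) by apply Dr_pos. assert (HR : 0 <= R) by apply pos_INR.
  apply (is_lim_seq_ext (fun n => (8 * INR (S n) ^ 2 + (4 * R - 4) * INR (S n) + (-4 - 4 * R - (R + 2) * (R - 1)))
       / (32 * D * INR (S n) ^ 2 + 32 * D * R * INR (S n) + - (8 * D * (2 * R + 1))) * xrt r n)).
  - intros n. unfold Gc, qq. fold R. fold D. rewrite S_INR. generalize (pos_INR n). intros. field.
    repeat split; try lra.
    replace (32 * D * (INR n + 1) ^ 2 + 32 * D * R * (INR n + 1) + - (8 * D * (2 * R + 1)))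
      with (8 * D * ((2 * INR n + 2 * R + 3) * (2 * INR n + 1))) by ring.
    apply Rgt_not_eq. apply Rmult_lt_0_compat; [lra| apply Rmult_lt_0_compat; lra].
  - unfold Lr. fold D. apply is_lim_seq_mult'. 2: apply xrt_lim.
    replace (1 / (4 * D)) with (8 / (32 * D)) by (field; lra).
    apply limQ. lra. intros n. generalize (INRS_pos n). intros.
    replace (32 * D * INR (S n) ^ 2 + 32 * D * R * INR (S n) + - (8 * D * (2 * R + 1)))
      with (8 * D * ((2 * INR (S n) + 2 * R + 1) * (2 * INR (S n) - 1))) by ring.
    assert (1 <= INR (S n)) by (rewrite S_INR; generalize (pos_INR n); lra).
    apply Rgt_not_eq. apply Rmult_lt_0_compat. lra. apply Rmult_lt_0_compat; lra.
Qed.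

Lemma wp_rec n : wp (S (S n)) = ((INR n + 1) * wp n + 1 / (INR n + 2)) / (INR n + 2).
Proof.
  generalize (LJ n). unfold wp. generalize (pos_INR n). intros Hn H.
  apply (Rmult_eq_reg_l (INR n + 2)); [| lra].
  set (a := RInt (fun z => z * sin z ^ S (S n)) 0 (PI / 2)) in *.
  set (b := RInt (fun z => z * sin z ^ n) 0 (PI / 2)) in *.
  replace ((INR n + 2) * (((INR n + 1) * b + 1 / (INR n + 2)) / (INR n + 2))) with ((INR n + 1) * b + 1 / (INR n + 2)) by (field; lra).
  lra.
Qed.

Lemma rhs_rec r : rhs5 (S r) = al r * rhs5 r + (Lr r - Gc r 1).
Proof.
  unfold rhs5, Lr, Gc, qq, al, Dr.
  replace (2 * S r + 2)%nat with (S (S (S (S (2 * r)))))%nat by lia.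
  replace (2 * S r)%nat with (S (S (2 * r)))%nat by lia.
  replace (2 * r + 2)%nat with (S (S (2 * r)))%nat by lia.
  replace (S (S (2 * r)) + 1)%nat with (2 + (2 * r + 1))%nat by lia.
  rewrite pow_add.
  replace (binomR (S (S (S (S (2 * r))))) (S r + 1)) with (Bc (S (S r))) by (unfold Bc; f_equal; lia).
  replace (binomR (S (S (2 * r))) (S r)) with (Bc (S r)) by (unfold Bc; f_equal; lia).
  replace (binomR (S (S (2 * r))) (r + 1)) with (Bc (S r)) by (unfold Bc; f_equal; lia).
  fold (Bc r).
  unfold xrt. replace (1 + r + 1)%nat with (S (S r)) by lia.
  rewrite (wp_rec (S (S (2 * r)))). rewrite !(wp_rec (2 * r)).
  rewrite Bc1, !B_S.
  assert (E4 : 4 ^ S r = 2 * 2 ^ (2 * r + 1)).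
  { rewrite pow_add, pow_mult. replace (2 ^ 2) with 4 by ring. rewrite <- tech_pow_Rmult. ring. }
  rewrite E4.
  rewrite !S_INR, !mult_INR. simpl INR.
  generalize (B_pos r) (pos_INR r) (pow_lt 2 (2 * r + 1) ltac:(lra)). intros.
  set (w := wp (2 * r)). set (P := 2 ^ (2 * r + 1)).
  field. repeat split. all: try lra. all: unfold P; lra.
Qed.

Lemma wp0 : wp 0 = PI ^ 2 / 8.
Proof.
  unfold wp. apply is_RInt_unique.
  apply (RIntD' (fun z => z ^ 2 / 2)). field.
  intros x _. auto_derive; auto. simpl; field.
  intros x _. auto_derive; auto.
Qed.

Lemma incr1R (a : nat -> R) (l : R) : is_series a (l + a O) -> is_series (fun k => a (S k)) l.
Proof. intros H. apply (is_series_incr_1 (K:=R_AbsRing) (V:=R_NormedModule)). exact H. Qed.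

Lemma base : is_series (fun m => term5 0 (m + 1)) (rhs5 0).
Proof.
  pose proof odd_basel as H1.
  assert (H2 : is_series (fun m => 1 / (2 * INR (S m) + 3) ^ 2) (PI ^ 2 / 8 - 1 - 1 / 9)).
  { apply (incr1R (fun k => 1 / (2 * INR k + 3) ^ 2)).
    replace (PI ^ 2 / 8 - 1 - 1 / 9 + 1 / (2 * INR 0 + 3) ^ 2) with (PI ^ 2 / 8 - 1).
    exact H1. simpl. field. }
  assert (Hl : is_lim_seq (fun m => - (1 / (2 * INR m + 3))) 0).
  { apply (is_lim_seq_incr_1 _ 0).
    apply (is_lim_seq_ext (fun n => (0 * INR (S n) + -1) / (2 * INR (S n) + 3))).
    intros n. field. generalize (INRS_pos n); lra.
    replace (Finite 0) with (Finite (0 / 2)) by (f_equal; field).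
    apply limL. lra. intros n. generalize (INRS_pos n); lra. }
  pose proof (tele _ 0 Hl) as H3.
  pose proof (is_series_plus (K:=R_AbsRing) (V:=R_NormedModule) _ _ _ _ H1 H2) as H12.
  pose proof (is_series_minus (K:=R_AbsRing) (V:=R_NormedModule) _ _ _ _ H12 H3) as H123.
  pose proof (is_series_scal (K:=R_AbsRing) (V:=R_NormedModule) (1/8) _ _ H123) as H.
  replace (rhs5 0) with (scal (1 / 8) (minus (plus (PI ^ 2 / 8 - 1) (PI ^ 2 / 8 - 1 - 1 / 9)) (0 - - (1 / (2 * INR 0 + 3))))).
  - apply (is_series_ext _ _ _) with (2 := H).
    intros m. unfold scal, minus, plus, opp; simpl. unfold mult; simpl.
    fixINR. rewrite term5_eq. unfold xrt, den. replace (m + 1 + 0 + 1)%nat with (S (S m)) by lia.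
    replace (m + 1)%nat with (S m) by lia.
    rewrite !B_S. rewrite !S_INR. simpl INR.
    generalize (B_pos m) (pos_INR m). intros. field. repeat split; lra.
  - unfold rhs5. replace (2 * 0 + 2)%nat with (S (S 0)) by lia.
    rewrite wp_rec. replace (2 * 0)%nat with 0%nat by lia. rewrite wp0.
    change (binomR (S (S 0)) (0 + 1)) with (Bc 1). change (binomR 0 0) with (Bc 0).
    rewrite Bc1, Bc0. unfold scal, minus, plus, opp; simpl. unfold mult; simpl. field.
Qed.

Theorem theorem5p0p4 (r : nat) :
  is_series (fun m : nat => term5 r (m + 1)) (rhs5 r).
Proof.
  induction r.
  - apply base.
  - assert (Hl : is_lim_seq (fun m => Gc r (m + 1)) (Lr r)).
    { apply (is_lim_seq_ext (fun m => Gc r (S m))). intros m; f_equal; lia.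
      apply (is_lim_seq_incr_1 (Gc r) (Lr r)). apply Gc_lim. }
    pose proof (tele _ _ Hl) as H3.
    pose proof (is_series_scal (K:=R_AbsRing) (V:=R_NormedModule) (al r) _ _ IHr) as H1.
    pose proof (is_series_plus (K:=R_AbsRing) (V:=R_NormedModule) _ _ _ _ H1 H3) as H.
    rewrite rhs_rec.
    replace (al r * rhs5 r + (Lr r - Gc r 1)) with (plus (scal (al r) (rhs5 r)) (Lr r - Gc r (0 + 1))) by (unfold plus, scal; simpl; unfold mult; simpl; reflexivity).
    apply (is_series_ext _ _ _) with (2 := H).
    intros m. unfold scal, plus; simpl. unfold mult; simpl.
    replace (S m + 1)%nat with (S (m + 1)) by lia.
    pose proof (Tstep r (m + 1)) as E. lra.
Qed.
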